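(* For every positive integer $m$ and all complex numbers $\alpha \neq 0$ and $x$, $$\sum_{k=1}^m \binom{m}{k} k^\alpha x^k = \sum_{j=1}^m \binom{m}{j} j!\, S(\alpha, j)\, x^j (1+x)^{m-j}.$$
   Context: For a complex number $\alpha \neq 0$ and a positive integer $k$, the Stirling function of the second kind is $$S(\alpha, k) = \frac{1}{k!} \sum_{j=1}^k (-1)^{k-j} \binom{k}{j} j^\alpha,$$ where for a positive integer $j$, $j^\alpha = e^{\alpha \ln j}$ with $\ln j$ the real logarithm. Here $(1+x)^0 = 1$ for all $x$. *)

(* Defs.v *)
From Stdlib Require Import Reals Arith Factorial.
Open Scope R_scope.

(* Complex numbers z = (Re z, Im z). *)
Definition Cplx : Type := (R * R)%type.

Definition RtoC (r : R) : Cplx := (r, 0).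
Definition Czero : Cplx := (0, 0).
Definition Cone : Cplx := (1, 0).
Definition Cadd (z w : Cplx) : Cplx := (fst z + fst w, snd z + snd w).
Definition Cmul (z w : Cplx) : Cplx :=
  (fst z * fst w - snd z * snd w, fst z * snd w + snd z * fst w).

Fixpoint Cpow (z : Cplx) (n : nat) : Cplx :=
  match n with O => Cone | S n' => Cmul z (Cpow z n') end.

Definition Cexp (z : Cplx) : Cplx :=
  (exp (fst z) * cos (snd z), exp (fst z) * sin (snd z)).

(* j^alpha := e^(alpha ln j) for a positive integer j, ln the real logarithm *)
Definition natCpow (j : nat) (alpha : Cplx) : Cplx :=
  Cexp (Cmul alpha (RtoC (ln (INR j)))).

Fixpoint Csum1 (f : nat -> Cplx) (m : nat) : Cplx :=
  match m with O => Czero | S m' => Cadd (Csum1 f m') (f (S m')) end.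

Definition Stirling2 (alpha : Cplx) (k : nat) : Cplx :=
  Cmul (RtoC (/ INR (fact k)))
       (Csum1 (fun j => Cmul (RtoC ((-1) ^ (k - j) * Binomial.C k j))
                             (natCpow j alpha)) k).

(* Main.v *)
Require Import Defs.
From Stdlib Require Import Reals Arith Factorial Lia Lra.
Open Scope R_scope.

Definition Copp (z : Cplx) : Cplx := (- fst z, - snd z).
Definition Csub (z w : Cplx) : Cplx := Cadd z (Copp w).

Lemma Cring_th : ring_theory Czero Cone Cadd Cmul Csub Copp (@eq Cplx).
Proof.
  constructor; intros; repeat match goal with z : Cplx |- _ => destruct z end;
  unfold Cadd, Cmul, Csub, Copp, Czero, Cone; simpl; try reflexivity; f_equal; ring.
Qed.
Add Ring Cring : Cring_th.

Fixpoint sumN (f : nat -> Cplx) (n : nat) : Cplx :=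
  match n with O => Czero | S n' => Cadd (sumN f n') (f n') end.

Lemma sumN_ext f g n : (forall k, (k < n)%nat -> f k = g k) -> sumN f n = sumN g n.
Proof.
  induction n; intros H; simpl; auto.
  rewrite IHn by (intros; apply H; lia). rewrite H by lia. reflexivity.
Qed.

Lemma sumN_add f g n : sumN (fun k => Cadd (f k) (g k)) n = Cadd (sumN f n) (sumN g n).
Proof. induction n; simpl. ring. rewrite IHn; ring. Qed.

Lemma sumN_scal c f n : sumN (fun k => Cmul c (f k)) n = Cmul c (sumN f n).
Proof. induction n; simpl. ring. rewrite IHn; ring. Qed.

Lemma sumN_zero f n : (forall k, (k < n)%nat -> f k = Czero) -> sumN f n = Czero.
Proof.
  induction n; intros H; simpl; auto.
  rewrite IHn by (intros; apply H; lia). rewrite H by lia. ring.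
Qed.

Lemma sumN_first f n : sumN f (S n) = Cadd (f O) (sumN (fun k => f (S k)) n).
Proof. induction n. simpl; ring. change (sumN f (S (S n))) with (Cadd (sumN f (S n)) (f (S n))).
  rewrite IHn; simpl; ring. Qed.

Lemma sumN_shift f p n : sumN f (p + n) = Cadd (sumN f p) (sumN (fun k => f (p + k)%nat) n).
Proof. induction n. rewrite Nat.add_0_r; simpl; ring.
  rewrite Nat.add_succ_r; simpl; rewrite IHn; ring. Qed.

Lemma sumN_swap (G : nat -> nat -> Cplx) n m :
  sumN (fun i => sumN (fun j => G i j) m) n = sumN (fun j => sumN (fun i => G i j) n) m.
Proof.
  induction n; simpl.
  - symmetry; apply sumN_zero; auto.
  - rewrite IHn, <- sumN_add. reflexivity.
Qed.

Lemma sumN_tail f p n : (p <= n)%nat -> (forall k, (p <= k < n)%nat -> f k = Czero) ->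
  sumN f n = sumN f p.
Proof.
  intros Hp H. replace n with (p + (n - p))%nat by lia.
  rewrite sumN_shift, (sumN_zero _ (n - p)). ring.
  intros; apply H; lia.
Qed.

Lemma Csum1_ext f g m : (forall k, (1 <= k <= m)%nat -> f k = g k) -> Csum1 f m = Csum1 g m.
Proof.
  induction m; intros H; simpl; auto.
  rewrite IHm by (intros; apply H; lia). rewrite H by lia. reflexivity.
Qed.

Lemma Csum1_sumN f m : f O = Czero -> Csum1 f m = sumN f (S m).
Proof. intros H0; induction m; simpl. rewrite H0; unfold Cadd, Czero; simpl; f_equal; ring.
  simpl in IHm; rewrite IHm; reflexivity. Qed.

Fixpoint bin (n k : nat) : R :=
  match n, k with
  | O, O => 1 | O, S _ => 0 | S _, O => 1
  | S n', S k' => bin n' k' + bin n' (S k') end.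

Lemma bin_gt n k : (n < k)%nat -> bin n k = 0.
Proof.
  revert k; induction n; intros [|k] H; simpl; try lia; auto.
  rewrite !IHn by lia; ring.
Qed.

Lemma C_n_0' n : Binomial.C n 0 = 1.
Proof. unfold Binomial.C; rewrite Nat.sub_0_r; simpl; field; apply INR_fact_neq_0. Qed.
Lemma C_n_n' n : Binomial.C n n = 1.
Proof. unfold Binomial.C; rewrite Nat.sub_diag; simpl; field; apply INR_fact_neq_0. Qed.

Lemma bin_C n k : (k <= n)%nat -> bin n k = Binomial.C n k.
Proof.
  revert k; induction n; intros [|k] H; simpl.
  - rewrite C_n_0'; auto.
  - lia.
  - rewrite C_n_0'; auto.
  - destruct (Nat.eq_dec k n).
    + subst k. rewrite (bin_gt n (S n)) by lia. rewrite IHn by lia. rewrite !C_n_n'; ring.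
    + rewrite !IHn by lia. apply pascal; lia.
Qed.

Lemma C_prod m j i : (i <= j)%nat -> (j <= m)%nat ->
  Binomial.C m j * Binomial.C j i = Binomial.C m i * Binomial.C (m - i) (j - i).
Proof.
  intros H1 H2; unfold Binomial.C.
  replace (m - i - (j - i))%nat with (m - j)%nat by lia.
  pose proof (INR_fact_neq_0 m). pose proof (INR_fact_neq_0 j).
  pose proof (INR_fact_neq_0 i). pose proof (INR_fact_neq_0 (m - j)).
  pose proof (INR_fact_neq_0 (j - i)). pose proof (INR_fact_neq_0 (m - i)).
  field; repeat split; auto.
Qed.

Lemma bin_prod m j i : (i <= j)%nat -> (j <= m)%nat ->
  bin m j * bin j i = bin m i * bin (m - i) (j - i).
Proof. intros; rewrite !bin_C by lia; apply C_prod; lia. Qed.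

Lemma RtoC_add a b : RtoC (a + b) = Cadd (RtoC a) (RtoC b).
Proof. unfold RtoC, Cadd; simpl; f_equal; ring. Qed.

Lemma RtoC_mul a b : RtoC (a * b) = Cmul (RtoC a) (RtoC b).
Proof. unfold RtoC, Cmul; simpl; f_equal; ring. Qed.
Lemma RtoC_1 : RtoC 1 = Cone. Proof. reflexivity. Qed.
Lemma RtoC_0 : RtoC 0 = Czero. Proof. reflexivity. Qed.

Lemma Cpow_add z a b : Cpow z (a + b) = Cmul (Cpow z a) (Cpow z b).
Proof. induction a; simpl. ring. rewrite IHa; ring. Qed.
Lemma Cpow_mul a b n : Cpow (Cmul a b) n = Cmul (Cpow a n) (Cpow b n).
Proof. induction n; simpl. unfold Cone, Cmul; simpl; f_equal; ring. rewrite IHn; ring. Qed.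
Lemma Cpow_RtoC r n : Cpow (RtoC r) n = RtoC (r ^ n).
Proof. induction n; simpl. reflexivity. rewrite IHn, RtoC_mul; reflexivity. Qed.
Lemma Cpow_one n : Cpow Cone n = Cone.
Proof. induction n; simpl. reflexivity. rewrite IHn; ring. Qed.

Lemma binom_thm n u v : Cpow (Cadd u v) n =
  sumN (fun l => Cmul (RtoC (bin n l)) (Cmul (Cpow u l) (Cpow v (n - l)))) (S n).
Proof.
  induction n.
  - simpl. rewrite RtoC_1; ring.
  - set (f := fun l => Cmul (RtoC (bin n l)) (Cmul (Cpow u l) (Cpow v (n - l)))).
    change (Cpow (Cadd u v) (S n)) with (Cmul (Cadd u v) (Cpow (Cadd u v) n)).
    rewrite IHn. fold f.
    rewrite <- (sumN_tail f (S n) (S (S n))) by (try lia; intros k Hk;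
      unfold f; rewrite bin_gt by lia; rewrite RtoC_0; ring).
    replace (Cmul (Cadd u v) (sumN f (S (S n)))) with
      (Cadd (Cmul u (sumN f (S (S n)))) (Cmul v (sumN f (S (S n))))) by ring.
    rewrite <- !sumN_scal.
    rewrite (sumN_first (fun l => Cmul v (f l))).
    rewrite (sumN_first (fun l => Cmul (RtoC (bin (S n) l)) _)).
    change (sumN (fun k => Cmul u (f k)) (S (S n))) with
      (Cadd (sumN (fun k => Cmul u (f k)) (S n)) (Cmul u (f (S n)))).
    assert (Hz : f (S n) = Czero) by (unfold f; rewrite bin_gt by lia; rewrite RtoC_0; ring).
    rewrite Hz.
    assert (H0 : Cmul v (f 0%nat) = Cmul (RtoC (bin (S n) 0)) (Cmul (Cpow u 0) (Cpow v (S n - 0)))).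
    { unfold f. simpl. rewrite Nat.sub_0_r. destruct n; simpl; ring. }
    rewrite H0.
    assert (H1 : sumN (fun k => Cmul (RtoC (bin (S n) (S k))) (Cmul (Cpow u (S k)) (Cpow v (S n - S k)))) (S n)
      = Cadd (sumN (fun k => Cmul u (f k)) (S n)) (sumN (fun k => Cmul v (f (S k))) (S n))).
    { rewrite <- sumN_add. apply sumN_ext. intros k Hk. unfold f. simpl bin.
      destruct (Nat.eq_dec k n).
      - subst k. rewrite (bin_gt n (S n)) by lia. rewrite Rplus_0_r, RtoC_0. simpl. rewrite !Nat.sub_diag. simpl. ring.
      - replace (S n - S k)%nat with (n - k)%nat by lia.
        replace (n - k)%nat with (S (n - S k)) by lia.
        rewrite RtoC_add. simpl. ring. }
    rewrite H1. ring.
Qed.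

Lemma W_lemma m i x : (i <= m)%nat ->
  sumN (fun j => Cmul (RtoC (bin m j * ((-1) ^ (j - i) * bin j i)))
                      (Cmul (Cpow x j) (Cpow (Cadd Cone x) (m - j)))) (S m)
  = Cmul (RtoC (bin m i)) (Cpow x i).
Proof.
  intros Hi.
  replace (S m) with (i + S (m - i))%nat by lia.
  rewrite sumN_shift.
  rewrite (sumN_zero _ i).
  2:{ intros k Hk. rewrite (bin_gt k i) by lia. rewrite !Rmult_0_r, RtoC_0. ring. }
  rewrite (sumN_ext _ (fun l => Cmul (Cmul (RtoC (bin m i)) (Cpow x i))
     (Cmul (RtoC (bin (m - i) l)) (Cmul (Cpow (Cmul (RtoC (-1)) x) l)
        (Cpow (Cadd Cone x) (m - i - l)))))).
  2:{ intros l Hl.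
      replace (i + l - i)%nat with l by lia.
      replace (m - (i + l))%nat with (m - i - l)%nat by lia.
      replace (bin m (i + l) * ((-1) ^ l * bin (i + l) i)) with
        (bin m i * (bin (m - i) l * (-1) ^ l)).
      2:{ assert (E := bin_prod m (i + l) i ltac:(lia) ltac:(lia)).
          replace (i + l - i)%nat with l in E by lia.
          replace (bin m (i + l) * ((-1) ^ l * bin (i + l) i)) with
            ((-1) ^ l * (bin m (i + l) * bin (i + l) i)) by ring.
          rewrite E. ring. }
      rewrite !RtoC_mul, Cpow_add, Cpow_mul, Cpow_RtoC. ring. }
  rewrite sumN_scal, <- binom_thm.
  replace (Cadd (Cmul (RtoC (-1)) x) (Cadd Cone x)) with Cone.
  2:{ destruct x; unfold RtoC, Cmul, Cadd, Cone; simpl; f_equal; ring. }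
  rewrite Cpow_one. ring.
Qed.

Lemma main_lemma m x (a : nat -> Cplx) :
  sumN (fun j => Cmul (RtoC (bin m j))
     (Cmul (sumN (fun i => Cmul (RtoC ((-1) ^ (j - i) * bin j i)) (a i)) (S j))
           (Cmul (Cpow x j) (Cpow (Cadd Cone x) (m - j))))) (S m)
  = sumN (fun k => Cmul (RtoC (bin m k)) (Cmul (a k) (Cpow x k))) (S m).
Proof.
  rewrite (sumN_ext _ (fun j => sumN (fun i => Cmul (a i)
     (Cmul (RtoC (bin m j * ((-1) ^ (j - i) * bin j i)))
           (Cmul (Cpow x j) (Cpow (Cadd Cone x) (m - j))))) (S m))).
  2:{ intros j Hj.
      rewrite <- (sumN_tail _ (S j) (S m)).
      2: lia.
      2:{ intros k Hk. rewrite (bin_gt j k) by lia. rewrite Rmult_0_r, RtoC_0. ring. }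
      set (D := Cmul (Cpow x j) (Cpow (Cadd Cone x) (m - j))).
      transitivity (sumN (fun i => Cmul (Cmul (RtoC (bin m j)) D)
          (Cmul (RtoC ((-1) ^ (j - i) * bin j i)) (a i))) (S m)).
      - rewrite sumN_scal; ring.
      - apply sumN_ext; intros; rewrite !RtoC_mul; ring. }
  rewrite sumN_swap.
  apply sumN_ext. intros i Hi.
  rewrite sumN_scal, W_lemma by lia. ring.
Qed.

Theorem proposition2 (m : nat) (alpha x : Cplx) :
  (1 <= m)%nat -> alpha <> Czero ->
  Csum1 (fun k => Cmul (RtoC (Binomial.C m k))
                       (Cmul (natCpow k alpha) (Cpow x k))) m
  = Csum1 (fun j => Cmul (RtoC (Binomial.C m j * INR (fact j)))
                         (Cmul (Stirling2 alpha j)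
                               (Cmul (Cpow x j) (Cpow (Cadd Cone x) (m - j))))) m.
Proof.
  intros _ _.
  set (a := fun i => match i with O => Czero | S _ => natCpow i alpha end).
  rewrite (Csum1_ext _ (fun k => Cmul (RtoC (bin m k)) (Cmul (a k) (Cpow x k)))).
  2:{ intros k Hk. destruct k; [lia|]. rewrite bin_C by lia. reflexivity. }
  rewrite Csum1_sumN by (simpl; ring).
  rewrite (Csum1_ext _ (fun j => Cmul (RtoC (bin m j))
     (Cmul (sumN (fun i => Cmul (RtoC ((-1) ^ (j - i) * bin j i)) (a i)) (S j))
           (Cmul (Cpow x j) (Cpow (Cadd Cone x) (m - j)))))).
  2:{ intros j Hj. unfold Stirling2.
      rewrite (Csum1_ext _ (fun i => Cmul (RtoC ((-1) ^ (j - i) * bin j i)) (a i))).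
      2:{ intros i Hi. destruct i; [lia|]. rewrite (bin_C j) by lia. reflexivity. }
      rewrite Csum1_sumN by (simpl; ring).
      rewrite (bin_C m j) by lia.
      assert (Hf : Cmul (RtoC (INR (fact j))) (RtoC (/ INR (fact j))) = Cone).
      { rewrite <- RtoC_mul, Rinv_r; [reflexivity | apply INR_fact_neq_0]. }
      rewrite RtoC_mul.
      set (S0 := sumN _ (S j)).
      set (D := Cmul (Cpow x j) _).
      transitivity (Cmul (Cmul (RtoC (INR (fact j))) (RtoC (/ INR (fact j))))
                         (Cmul (RtoC (Binomial.C m j)) (Cmul S0 D))).
      - ring.
      - rewrite Hf; ring. }
  rewrite Csum1_sumN by (simpl; ring).
  symmetry. apply main_lemma.
Qed.
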